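(* Let $\langle A,f,g\rangle$ be a binary PS-algebra and define $d\colon A\to A$ by $d(a)=f(a,a)+-g(a,a)$. Then $d$ is the unary discriminator on $A$ (i.e. $d(0)=0$ and $d(a)=1$ for all $a\neq0$) if and only if for all $a,b\in A$, $a\cdot b\neq0$ implies $g(a,b)\leq f(a,b)$.
   Context: A PS-algebra is $\langle A,f,g\rangle$ where $A$ is a Boolean algebra with at least two elements (operations $+,\cdot,-,0,1$) and $f,g\colon A^2\to A$ satisfy: $f(x,y)=0$ whenever $x=0$ or $y=0$; $f$ is additive in each argument; $g(x,y)=1$ whenever $x=0$ or $y=0$; $g$ is co-additive in each argument ($g(x+x',y)=g(x,y)\cdot g(x',y)$, $g(x,y+y')=g(x,y)\cdot g(x,y')$). *)

(* Defs.v *)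
From mathcomp Require Import all_boot all_order.
Set Implicit Arguments. Unset Strict Implicit. Unset Printing Implicit Defensive.
Import Order.Theory.
Local Open Scope order_scope.

(* A Boolean algebra is a complemented distributive lattice with top and
   bottom (MathComp: ctbDistrLatticeType). Operations: + = join `|`,
   . = meet `&`, - = complement ~`, 0 = \bot, 1 = \top. *)

Definition is_PS_algebra (disp : Order.disp_t) (A : ctbDistrLatticeType disp)
  (f g : A -> A -> A) : Prop :=
  (\bot : A) != \top /\
      (forall x y : A, x = \bot \/ y = \bot -> f x y = \bot) /\
      (forall x x' y : A, f (x `|` x') y = f x y `|` f x' y) /\
      (forall x y y' : A, f x (y `|` y') = f x y `|` f x y') /\
      (forall x y : A, x = \bot \/ y = \bot -> g x y = \top) /\
      (forall x x' y : A, g (x `|` x') y = g x y `&` g x' y) /\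
      (forall x y y' : A, g x (y `|` y') = g x y `&` g x y').

Definition unary_discriminator (disp : Order.disp_t) (A : ctbDistrLatticeType disp)
  (d : A -> A) : Prop :=
  d \bot = \bot /\ (forall a : A, a != \bot -> d a = \top).

(* Main.v *)
Require Import Defs.
From mathcomp Require Import all_boot all_order.
Import Order.Theory.
Local Open Scope order_scope.

Lemma split_meet (disp : Order.disp_t) (A : ctbDistrLatticeType disp) (a b : A) :
  a = (a `&` b) `|` (a `&` ~` b).
Proof. by rewrite -meetUr joinxC meetx1. Qed.

Theorem lemma35 (disp : Order.disp_t) (A : ctbDistrLatticeType disp)
  (f g : A -> A -> A) :
  is_PS_algebra f g ->
  (unary_discriminator (fun a : A => f a a `|` ~` (g a a)) <->
   (forall a b : A, a `&` b != \bot -> g a b <= f a b)).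
Proof.
move=> [nbt [f0 [fl [fr [g1 [gl gr]]]]]].
have fmonl : forall x y b, x <= y -> f x b <= f y b.
  by move=> x y b /join_idPr <-; rewrite fl leUl.
have fmonr : forall a x y, x <= y -> f a x <= f a y.
  by move=> a x y /join_idPr <-; rewrite fr leUl.
have gmonl : forall x y b, x <= y -> g y b <= g x b.
  by move=> x y b /join_idPr <-; rewrite gl leIl.
have gmonr : forall a x y, x <= y -> g a y <= g a x.
  by move=> a x y /join_idPr <-; rewrite gr leIl.
split.
- move=> [_ H] a b nab.
  have Hc := H _ nab.
  set c := a `&` b in Hc.
  have gc : g c c <= f c c.
    apply/meet_idPl; rewrite -[LHS]joinx0 -(meetxC (g c c)) -meetUr.
    by rewrite Hc meetx1.
  have h1 := gmonl _ _ b (leIl a b).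
  have h2 := gmonr c _ _ (leIr b a).
  have h3 := fmonl _ _ c (leIl a b).
  have h4 := fmonr a _ _ (leIr b a).

  exact: (le_trans h1 (le_trans h2 (le_trans gc (le_trans h3 h4)))).
- move=> H; split.
    by rewrite f0 ?g1; [rewrite compl1 joinx0 | left | left].
  move=> a na; apply/eqP; rewrite eq_le lex1 /=.
  have := H a a; rewrite meetxx => /(_ na) le.
  apply: le_trans (_ : g a a `|` ~` g a a <= _).
    by rewrite joinxC.
  by apply: leU2.
Qed.
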